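(* Let $G$ be a connected chordal graph that is not complete. Then $\kappa(G)=a(G)$ if and only if $G$ has a minimal separator $S$ such that every vertex of $S$ is a universal vertex of $G$.
   Context: All graphs are finite, simple and undirected. A graph is chordal if every cycle of length at least four has a chord. The Laplacian matrix of $G$ is $L(G)=D(G)-A(G)$, where $D(G)$ is the diagonal matrix of vertex degrees and $A(G)$ the adjacency matrix; its eigenvalues are $\mu_1(G)\ge\dots\ge\mu_n(G)=0$. The algebraic connectivity is $a(G)=\mu_{n-1}(G)$. A set $S\subset V$ is a separator of $G$ if at least two vertices lying in the same connected component of $G$ lie in distinct connected components of $G[V\setminus S]$; $S$ is a minimal separator if it is a separator and no proper subset of $S$ is a separator. The vertex connectivity $\kappa(G)$ is the minimum cardinality of a separator of $G$. A vertex is universal if it is adjacent to all other vertices. *)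

(* Defs.v *)
From HB Require Import structures.
From mathcomp Require Import all_boot all_order all_algebra all_field.
Set Implicit Arguments. Unset Strict Implicit. Unset Printing Implicit Defensive.
Import Order.TTheory GRing.Theory Num.Theory.

Section Graphs.
Variable n : nat.
Variable adj : rel 'I_n.

Definition simple_graph : Prop := symmetric adj /\ irreflexive adj.

Definition connected_graph : Prop := forall x y : 'I_n, connect adj x y.

Definition complete_graph : Prop := forall x y : 'I_n, x != y -> adj x y.

Definition universal (v : 'I_n) : bool := [forall w, (w != v) ==> adj v w].

Definition graph_cycle (c : seq 'I_n) : bool :=
  [&& 4 <= size c, uniq c & cycle adj c].

Definition has_chord (c : seq 'I_n) : bool :=
  [exists x, exists y,
     [&& x \in c, y \in c, adj x y, y != next c x & x != next c y]].

Definition chordal : Prop := forall c, graph_cycle c -> has_chord c.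

Definition adj_minus (S : {set 'I_n}) : rel 'I_n :=
  [rel u v | [&& adj u v, u \notin S & v \notin S]].

Definition separator (S : {set 'I_n}) : bool :=
  [exists x, exists y,
     [&& x \notin S, y \notin S, connect adj x y & ~~ connect (adj_minus S) x y]].

Definition minimal_separator (S : {set 'I_n}) : bool :=
  separator S && [forall T : {set 'I_n}, (T \proper S) ==> ~~ separator T].

(* vertex connectivity: minimum size of a separator (n - 1 if none, the usual
   convention for complete graphs) *)
Definition vertex_connectivity : nat :=
  \big[minn/n.-1]_(S : {set 'I_n} | separator S) #|S|.

Definition degree (v : 'I_n) : nat := #|[set w | adj v w]|.

Local Open Scope ring_scope.

Definition laplacian : 'M[algC]_n :=
  \matrix_(i, j) (if i == j then (degree i)%:R
                  else if adj i j then -1 else 0).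

(* the Laplacian eigenvalues with multiplicity: the roots of the
   characteristic polynomial (which splits over the algebraically closed algC) *)
Definition laplacian_spectrum : seq algC :=
  sval (closed_field_poly_normal (char_poly laplacian)).

(* mu_1 >= ... >= mu_n (eigenvalues are real, so this order is total on them) *)
Definition laplacian_eigs : seq algC :=
  sort (fun x y => y <= x) laplacian_spectrum.

(* a(G) = mu_{n-1}, i.e. index n-2 (0-based) of the nonincreasing list *)
Definition algebraic_connectivity : algC := nth 0 laplacian_eigs (n - 2)%N.

End Graphs.

(* Main.v *)
Require Import Defs.
From HB Require Import structures.
From mathcomp Require Import all_boot all_order all_algebra all_field.
From mathcomp Require Import ring.
Import Order.TTheory GRing.Theory Num.Theory.

Section W1S.
Set Implicit Arguments. Unset Strict Implicit. Unset Printing Implicit Defensive.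
Local Open Scope ring_scope.
Local Open Scope sesquilinear_scope.

Lemma char_poly_similar n (P D : 'M[algC]_n) : P \in unitmx ->
  char_poly (invmx P *m D *m P) = char_poly D.
Proof.
move=> Pu; rewrite /char_poly /char_poly_mx.
set Q := map_mx polyC P; set Qi := map_mx polyC (invmx P).
have QiQ : Qi *m Q = 1%:M by rewrite -map_mxM mulVmx // map_mx1.
have -> : 'X%:M - map_mx polyC (invmx P *m D *m P) =
          Qi *m ('X%:M - map_mx polyC D) *m Q.
  rewrite !map_mxM mulmxBr mulmxBl -/Q -/Qi; congr (_ - _).
  by rewrite scalar_mxC -mulmxA QiQ mulmx1.
have dd : \det Qi * \det Q = 1 by rewrite -det_mulmx QiQ det1.
by rewrite !det_mulmx mulrAC dd mul1r.
Qed.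

Lemma lap_symmetric n (adj : rel 'I_n) : symmetric adj ->
  laplacian adj \is symmetricmx.
Proof.
move=> sym; rewrite is_hermitianmxE expr0 scale1r; apply/eqP/matrixP => i j.
by rewrite /laplacian !mxE /= sym eq_sym; case: eqVneq => // ->.
Qed.

Lemma lap_real n (adj : rel 'I_n) : laplacian adj \is a mxOver Num.real.
Proof.
apply/mxOverP => i j; rewrite /laplacian mxE; case: ifP => _; first exact: realn.
by case: ifP => _; rewrite ?rpredN ?real1 ?real0.
Qed.

Lemma lap_herm n (adj : rel 'I_n) : symmetric adj ->
  laplacian adj \is hermsymmx.
Proof. by move=> sym; apply: realsym_hermsym; [exact: lap_symmetric|exact: lap_real]. Qed.

Definition spP n (adj : rel 'I_n) := spectralmx (laplacian adj).
Definition spd n (adj : rel 'I_n) (i : 'I_n) := spectral_diag (laplacian adj) 0 i.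

Lemma lap_decomp n (adj : rel 'I_n) : symmetric adj ->
  laplacian adj = (spP adj)^t* *m diag_mx (spectral_diag (laplacian adj)) *m spP adj.
Proof.
move=> sym; rewrite /spP -invmx_unitary ?spectral_unitarymx //.
by apply/orthomx_spectralP/hermitian_normalmx/lap_herm.
Qed.

Lemma spd_real n (adj : rel 'I_n) i : symmetric adj -> spd adj i \is Num.real.
Proof.
move=> sym; have := hermitian_spectral_diag_real (lap_herm sym).
by move/mxOverP; apply.
Qed.

Lemma spectrum_perm n (adj : rel 'I_n) : symmetric adj ->
  perm_eq (laplacian_spectrum adj) [seq spd adj i | i <- enum 'I_n].
Proof.
move=> sym; apply: prod_XsubC_eq.
rewrite /laplacian_spectrum; case: closed_field_poly_normal => rs /= Hrs.
have mon := char_poly_monic (laplacian adj).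
move: Hrs; rewrite (monicP mon) scale1r => <-.
rewrite {1}(lap_decomp sym) -invmx_unitary ?spectral_unitarymx //.
rewrite char_poly_similar ?spectral_unit // char_poly_trig ?diag_mx_is_trig //.
rewrite big_map big_enum /=; apply: eq_bigr => i _.
by rewrite mxE eqxx mulr1n.
Qed.

End W1S.

Section W2S.
Set Implicit Arguments. Unset Strict Implicit. Unset Printing Implicit Defensive.
Local Open Scope ring_scope.

Lemma sort_facts (rs : seq algC) m : all (fun z => z \is Num.real) rs ->
  size rs = m -> (1 < m)%N ->
  let a := nth 0 (sort (fun x y => y <= x) rs) (m - 2) in
  a \is Num.real /\ (count (fun z => (z < a)%R) rs <= 1)%N /\
  forall c, c \is Num.real -> (count (fun z => (z < c)%R) rs <= 1)%N -> c <= a.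
Proof.
move=> rsR szrs m1 a.
rewrite /a; set s := sort _ rs.
have srt : sorted (fun x y : algC => y <= x) s.
  apply: (sort_sorted_in (P := fun z : algC => z \is Num.real)) rsR.
  by move=> x y xR yR; rewrite /= real_leVge.
have pe : perm_eq (rev s) rs by rewrite perm_rev perm_sort.
have szr : size (rev s) = m by rewrite size_rev size_sort.
have aE : nth 0 s (m - 2) = nth 0 (rev s) 1.
  by rewrite nth_rev ?szr // size_sort szrs.
have srt2 : sorted (fun x y : algC => x <= y) (rev s) by rewrite rev_sorted.
have allR : all (fun z => z \is Num.real) (rev s) by rewrite (perm_all _ pe).
move: srt2 aE szr allR; case: (rev s) pe => [|b [|a' t]] //= pe srt2 aE szr allR.
  by move: m1; rewrite -szr.
  by move: m1; rewrite -szr.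
rewrite aE {aE}; move: allR => /and3P [bR aR tR].
have [ba at_] : b <= a' /\ path (fun x y : algC => x <= y) a' t.
  by move: srt2 => /andP [].
move: at_; rewrite path_sortedE; last exact: le_trans.
move=> /andP [allt _].
have ct : forall c, c <= a' -> count (fun z => z < c) t = 0%N.
  move=> c ca; apply/eqP; rewrite -leqn0 leqNgt -has_count; apply/hasPn => z zt.
  by rewrite le_gtF // (le_trans ca) //; move/allP: allt; apply.
split => //; split.
  by rewrite -((permP pe) _) /= ltxx ct // add0n addn0 leq_b1.
move=> c cR; rewrite -((permP pe) _) /=.
rewrite real_leNgt //; apply: contraTN => ac.
by rewrite ac (le_lt_trans ba ac).
Qed.

End W2S.

Section W3S.
Set Implicit Arguments. Unset Strict Implicit. Unset Printing Implicit Defensive.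
Local Open Scope ring_scope.
Local Open Scope sesquilinear_scope.

Definition qf n (A : 'M[algC]_n) (v : 'rV_n) := (v *m A *m v^t*) 0 0.
Definition nrm n (v : 'rV[algC]_n) := (v *m v^t*) 0 0.
Definition onev n : 'rV[algC]_n := const_mx 1.
Definition sumv n (v : 'rV[algC]_n) := (v *m (onev n)^t*) 0 0.

Lemma dot_form n (w u : 'rV[algC]_n) :
  (w *m u^t*) 0 0 = \sum_k w 0 k * (u 0 k)^*.
Proof. by rewrite !mxE; apply: eq_bigr => k _; rewrite !mxE. Qed.

Lemma diag_form n (w D : 'rV[algC]_n) :
  (w *m diag_mx D *m w^t*) 0 0 = \sum_k D 0 k * (w 0 k * (w 0 k)^*).
Proof.
rewrite dot_form; apply: eq_bigr => k _.
by rewrite mul_mx_diag mxE mulrAC mulrC.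
Qed.


Lemma dotU n (P : 'M[algC]_n) (u1 u2 : 'rV[algC]_n) : P \is unitarymx ->
  u1 *m P^t* *m (u2 *m P^t*)^t* = u1 *m u2^t*.
Proof.
move=> Pu; rewrite trmx_mul map_mxM trmxCK mulmxA mulmxKtV //.
Qed.

Lemma nrm_ge0 n (v : 'rV[algC]_n) : 0 <= nrm v.
Proof.
by rewrite /nrm dot_form sumr_ge0 // => k _; rewrite mul_conjC_ge0.
Qed.

Lemma qf_spec n (A P : 'M[algC]_n) (D : 'rV[algC]_n) v :
  A = P^t* *m diag_mx D *m P ->
  qf A v = \sum_k D 0 k * ((v *m P^t*) 0 k * ((v *m P^t*) 0 k)^*).
Proof.
move=> AE; rewrite /qf AE -diag_form; congr (_ 0 0).
by rewrite trmx_mul map_mxM trmxCK !mulmxA.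
Qed.

Lemma nrm_spec n (P : 'M[algC]_n) v : P \is unitarymx ->
  nrm v = \sum_k (v *m P^t*) 0 k * ((v *m P^t*) 0 k)^*.
Proof. by move=> Pu; rewrite /nrm -(dotU v v Pu) dot_form. Qed.

Lemma sum2 n (i j : 'I_n) (F : 'I_n -> algC) : i != j ->
  (forall k, k != i -> k != j -> F k = 0) -> \sum_k F k = F i + F j.
Proof.
move=> ij H; rewrite (bigD1 i) //= (bigD1 j) /= 1?eq_sym // big1 ?addr0 //.
by move=> k /andP [ki kj]; apply: H.
Qed.

Lemma CL n (A P : 'M[algC]_n) (D : 'rV[algC]_n) (c : algC) :
  P \is unitarymx -> A = P^t* *m diag_mx D *m P -> (0 < n)%N ->
  onev n *m A = 0 -> (forall k, D 0 k \is Num.real) -> 0 < c ->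
  (forall i j, D 0 i < c -> D 0 j < c -> i = j) ->
  forall v, sumv v = 0 -> c * nrm v <= qf A v.
Proof.
move=> Pu AE n0 oA DR c0 Duniq v sv0.
set w := v *m P^t*; set y := onev n *m P^t*.
have cR : c \is Num.real by rewrite gtr0_real.
have qE : qf A v = \sum_k D 0 k * (w 0 k * (w 0 k)^*) by apply: qf_spec.
have nE : nrm v = \sum_k w 0 k * (w 0 k)^* by apply: nrm_spec.
have yD : forall k, D 0 k * y 0 k = 0.
  have yD0 : y *m diag_mx D = 0.
    have e1 : y *m diag_mx D *m P = 0.
      by rewrite /y -!mulmxA [P^t* *m _]mulmxA -AE oA.
    by rewrite -(mulmxtVK (y *m diag_mx D) Pu) e1 mul0mx.
  by move=> k; move/matrixP: yD0 => /(_ 0 k); rewrite mul_mx_diag !mxE mulrC.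
have wy : \sum_k w 0 k * (y 0 k)^* = 0 by rewrite -dot_form dotU.
have [j yj] : exists j, y 0 j != 0.
  case: (pickP (fun j => y 0 j != 0)) => [j yj|H]; first by exists j.
  have y0 : y = 0.
    apply/matrixP => i k; rewrite [i]ord1 [RHS]mxE; apply/eqP; apply/negbFE; exact: (H k).
  have : onev n = 0 by rewrite -(mulmxKtV (onev n) Pu) // -/y y0 mul0mx.
  by move/matrixP => /(_ 0 (Ordinal n0)); rewrite !mxE => /eqP; rewrite oner_eq0.
have Dj : D 0 j < c.
  have := yD j; move/eqP; rewrite mulf_eq0 (negbTE yj) orbF => /eqP ->.
  exact: c0.
have others : forall i, i != j -> y 0 i = 0.
  move=> i ij; case: (boolP (D 0 i < c)) => [Di|nDi].
    by rewrite (Duniq _ _ Di Dj) eqxx in ij.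
  have Dpos : 0 < D 0 i.
    by apply: (lt_le_trans c0); rewrite real_leNgt.
  by have := yD i; move/eqP; rewrite mulf_eq0 gt_eqF //= => /eqP.
have wj : w 0 j = 0.
  move: wy; rewrite (bigD1 j) //= big1 ?addr0; last first.
    by move=> i ij; rewrite others // conjC0 mulr0.
  by move/eqP; rewrite mulf_eq0 conjC_eq0 (negbTE yj) orbF => /eqP.
rewrite qE nE mulr_sumr; apply: ler_sum => k _.
case: (boolP (D 0 k < c)) => [Dk|nDk].
  by rewrite (Duniq _ _ Dk Dj) wj mul0r !mulr0.
by apply: ler_wpM2r; rewrite ?mul_conjC_ge0 // real_leNgt.
Qed.

Lemma CL2 n (A P : 'M[algC]_n) (D : 'rV[algC]_n) (c : algC) :
  P \is unitarymx -> A = P^t* *m diag_mx D *m P ->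
  (forall v, sumv v = 0 -> c * nrm v <= qf A v) ->
  forall i j, D 0 i < c -> D 0 j < c -> i = j.
Proof.
move=> Pu AE H i j Di Dj; apply/eqP; apply: contraT => ij.
set y := onev n *m P^t*.
pose ab := if (y 0 i == 0) && (y 0 j == 0) then (1, 0)
           else ((y 0 j)^*, - (y 0 i)^*).
have abE : ab.1 * (y 0 i)^* + ab.2 * (y 0 j)^* = 0.
  rewrite /ab; case: ifP => [/andP [/eqP -> /eqP ->]|_] /=.
    by rewrite conjC0 !mulr0 addr0.
  by rewrite mulNr mulrC subrr.
have ab0 : (ab.1 != 0) || (ab.2 != 0).
  rewrite /ab; case: ifP => /= [_|]; first by rewrite oner_eq0.
  by rewrite oppr_eq0 !conjC_eq0 => /negbT; rewrite negb_and orbC.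
pose w : 'rV[algC]_n := \row_k (if k == i then ab.1 else if k == j then ab.2 else 0).
pose v := w *m P.
have vw : v *m P^t* = w by rewrite /v mulmxtVK.
have wi : w 0 i = ab.1 by rewrite mxE eqxx.
have wj : w 0 j = ab.2 by rewrite mxE eq_sym (negbTE ij) eqxx.
have sv : sumv v = 0.
  rewrite /sumv -(dotU v (onev n) Pu) vw -/y dot_form.
  rewrite (sum2 ij); last by move=> k ki kj; rewrite mxE (negbTE ki) (negbTE kj) mul0r.
  by rewrite wi wj.
have := H v sv.
rewrite (qf_spec v AE) (nrm_spec v Pu) vw.
rewrite (sum2 ij); last by move=> k ki kj; rewrite mxE (negbTE ki) (negbTE kj) mul0r.
rewrite (sum2 ij); last by move=> k ki kj; rewrite mxE (negbTE ki) (negbTE kj) mul0r mulr0.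
rewrite wi wj.
set fa := ab.1 * _; set fb := ab.2 * _.
have fa0 : 0 <= fa by rewrite mul_conjC_ge0.
have fb0 : 0 <= fb by rewrite mul_conjC_ge0.
have key : D 0 i * fa + D 0 j * fb < c * (fa + fb).
  rewrite mulrDr; case/orP: ab0 => [a0|b0].
    apply: ltr_leD; first by rewrite ltr_pM2r // /fa mul_conjC_gt0.
    by apply: ler_wpM2r => //; exact: ltW.
  apply: ler_ltD; last by rewrite ltr_pM2r // /fb mul_conjC_gt0.
  by apply: ler_wpM2r => //; exact: ltW.
by rewrite lt_geF.
Qed.

End W3S.

Section W4S.
Set Implicit Arguments. Unset Strict Implicit. Unset Printing Implicit Defensive.
Local Open Scope ring_scope.
Local Open Scope sesquilinear_scope.

Lemma lapE n (adj : rel 'I_n) i j : irreflexive adj ->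
  laplacian adj i j = (i == j)%:R * (degree adj i)%:R - (adj i j)%:R.
Proof.
move=> irr; rewrite /laplacian mxE; case: eqVneq => [->|ij].
  by rewrite irr mul1r subr0.
by rewrite mul0r sub0r; case: (adj i j) => //=; rewrite oppr0.
Qed.

Lemma degE n (adj : rel 'I_n) i :
  (degree adj i)%:R = \sum_j (adj i j)%:R :> algC.
Proof.
rewrite /degree -sum1_card natr_sum big_mkcond /=; apply: eq_bigr => j _.
by rewrite inE; case: (adj i j).
Qed.

Lemma Eform n (adj : rel 'I_n) : simple_graph adj -> forall v,
  2 * qf (laplacian adj) v =
  \sum_i \sum_j (adj i j)%:R * ((v 0 i - v 0 j) * (v 0 i - v 0 j)^*).
Proof.
move=> [sym irr] v.
have qE : qf (laplacian adj) v =
    \sum_i \sum_j (adj i j)%:R * (v 0 i * (v 0 i)^* - v 0 i * (v 0 j)^*).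
  rewrite /qf dot_form.
  under eq_bigr => j _ do rewrite mxE mulr_suml.
  rewrite exchange_big /=; apply: eq_bigr => i _.
  under eq_bigr => j _ do rewrite lapE //.
  under eq_bigr => j _ do rewrite mulrBr mulrBl.
  under [X in _ = X]eq_bigr => j _ do rewrite mulrBr.
  rewrite !sumrB; congr (_ - _); last first.
    by apply: eq_bigr => j _; ring.
  rewrite -mulr_suml -degE (bigD1 i) //= big1 ?addr0; first by rewrite eqxx mul1r mulrAC mulrC.
  by move=> j ji; rewrite eq_sym (negbTE ji) mul0r mulr0 mul0r.
have sw : \sum_i \sum_j (adj i j)%:R * (v 0 j * (v 0 j)^* - v 0 j * (v 0 i)^*)
   = qf (laplacian adj) v.
  rewrite qE exchange_big /=; apply: eq_bigr => i _; apply: eq_bigr => j _.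
  by rewrite sym.
rewrite -[X in X * _]/(1 + 1) mulrDl mul1r.
rewrite {2}qE -{1}sw -big_split /=; apply: eq_bigr => i _.
rewrite -big_split /=; apply: eq_bigr => j _.
by rewrite rmorphB /=; ring.
Qed.

End W4S.

Section W5S.
Set Implicit Arguments. Unset Strict Implicit. Unset Printing Implicit Defensive.
Local Open Scope ring_scope.
Local Open Scope sesquilinear_scope.

Lemma Gid n (b v : 'I_n -> algC) : (forall i, (b i)^* = b i) ->
  \sum_i \sum_j b i * b j * ((v i - v j) * (v i - v j)^*) =
  2 * ((\sum_j b j) * \sum_i b i * (v i * (v i)^*))
  - 2 * ((\sum_i b i * v i) * (\sum_i b i * v i)^*).
Proof.
move=> bR.
have cs : (\sum_i b i * v i)^* = \sum_i b i * (v i)^*.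
  by rewrite rmorph_sum; apply: eq_bigr => i _; rewrite rmorphM /= bR.
have e1 : (\sum_i b i * (v i * (v i)^*)) * (\sum_j b j) =
          \sum_i \sum_j b i * b j * (v i * (v i)^*).
  rewrite big_distrlr /=; apply: eq_bigr => i _; apply: eq_bigr => j _; ring.
have e2 : (\sum_j b j) * (\sum_i b i * (v i * (v i)^*)) =
          \sum_i \sum_j b i * b j * (v j * (v j)^*).
  rewrite big_distrlr /=; apply: eq_bigr => i _; apply: eq_bigr => j _; ring.
have e3 : (\sum_i b i * v i) * (\sum_i b i * v i)^* =
          \sum_i \sum_j b i * b j * (v i * (v j)^*).
  rewrite cs big_distrlr /=; apply: eq_bigr => i _; apply: eq_bigr => j _; ring.
have e4 : (\sum_i b i * v i)^* * (\sum_i b i * v i) =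
          \sum_i \sum_j b i * b j * (v j * (v i)^*).
  rewrite cs big_distrlr /=; apply: eq_bigr => i _; apply: eq_bigr => j _; ring.
transitivity ((\sum_i \sum_j b i * b j * (v i * (v i)^*) +
                \sum_i \sum_j b i * b j * (v j * (v j)^*)) -
               (\sum_i \sum_j b i * b j * (v i * (v j)^*) +
                \sum_i \sum_j b i * b j * (v j * (v i)^*))); last first.
  rewrite -e1 -e2 -e3 -e4; ring.
rewrite -!big_split -sumrB /=; apply: eq_bigr => i _.
rewrite -!big_split -sumrB /=; apply: eq_bigr => j _.
rewrite rmorphB /=; ring.
Qed.

Lemma sumv_sum n (v : 'rV[algC]_n) : sumv v = \sum_k v 0 k.
Proof. by rewrite /sumv dot_form; apply: eq_bigr => k _; rewrite mxE conjC1 mulr1. Qed.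

Lemma nrm_sum n (v : 'rV[algC]_n) : nrm v = \sum_k v 0 k * (v 0 k)^*.
Proof. by rewrite /nrm dot_form. Qed.

Lemma LB n (adj : rel 'I_n) (S : {set 'I_n}) : simple_graph adj ->
  (forall s, s \in S -> universal adj s) ->
  forall v, sumv v = 0 -> #|S|%:R * nrm v <= qf (laplacian adj) v.
Proof.
move=> [sym irr] univ v sv.
pose t i j := (v 0 i - v 0 j) * (v 0 i - v 0 j)^*.
have t0 : forall i j, 0 <= t i j by move=> i j; rewrite mul_conjC_ge0.
pose bT i : algC := (i \notin S)%:R.
have bTR : forall i, (bT i)^* = bT i by move=> i; rewrite conjC_nat.
pose N := nrm v.
pose NT := \sum_i bT i * (v 0 i * (v 0 i)^*).
pose s := \sum_i bT i * v 0 i.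
have mE : \sum_j bT j = #|~: S|%:R.
  rewrite -sum1_card natr_sum [RHS]big_mkcond /=; apply: eq_bigr => j _.
  by rewrite /bT inE; case: (j \in S).
have NTN : NT <= N.
  rewrite /NT /N nrm_sum; apply: ler_sum => i _; rewrite /bT.
  by case: (i \in S); rewrite /= ?mul1r ?mul0r ?mul_conjC_ge0.
have G1 : \sum_i \sum_j 1 * 1 * t i j = 2 * (n%:R * N).
  have := @Gid n (fun _ => 1) (fun i => v 0 i) (fun _ => @conjC1 _).
  rewrite /t => ->; rewrite sumr_const card_ord.
  have -> : \sum_i 1 * v 0 i = 0 by rewrite -[RHS]sv sumv_sum; apply: eq_bigr => i _; rewrite mul1r.
  rewrite mul0r mulr0 subr0; congr (2 * (_ * _)).
  by rewrite /N nrm_sum; apply: eq_bigr => i _; rewrite mul1r.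
have GT : \sum_i \sum_j bT i * bT j * t i j <= 2 * (#|~: S|%:R * N).
  have := @Gid n bT (fun i => v 0 i) bTR; rewrite /t => ->; rewrite mE -/NT -/s.
  apply: (@le_trans _ _ (2 * (#|~: S|%:R * NT))).
    by rewrite lerBlDr lerDl pmulr_rge0 ?mul_conjC_ge0.
  by rewrite ler_pM2l // ler_wpM2l.
have step : \sum_i \sum_j (1 * 1 - bT i * bT j) * t i j <= 2 * qf (laplacian adj) v.
  rewrite Eform //; apply: ler_sum => i _; apply: ler_sum => j _.
  case: (eqVneq i j) => [->|ij]; first by rewrite /t subrr mul0r !mulr0.
  rewrite /bT; case Hi: (i \in S) => /=.
    have := univ i Hi; move/forallP => /(_ j); rewrite eq_sym ij /= => ->.
    by rewrite /t /= ?mulr0n ?mulr1n ?mul0r ?mulr0 ?mul1r ?subr0 ?mul1r.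
  case Hj: (j \in S) => /=.
    have := univ j Hj; move/forallP => /(_ i); rewrite ij /= sym => ->.
    by rewrite /t /= ?mulr0n ?mulr1n ?mul0r ?mulr0 ?mul1r ?subr0 ?mul1r.
  by rewrite /t /= ?mulr1n ?mul1r subrr mul0r mulr_ge0 ?mul_conjC_ge0.
have : 2 * (#|S|%:R * N) <= 2 * qf (laplacian adj) v.
  apply: le_trans step.
  under eq_bigr => i _ do under eq_bigr => j _ do rewrite mulrBl.
  under eq_bigr => i _ do rewrite sumrB.
  rewrite sumrB G1.
  have nE : n%:R = #|S|%:R + #|~: S|%:R :> algC by rewrite -natrD cardsC card_ord.
  apply: (@le_trans _ _ (2 * (n%:R * N) - 2 * (#|~: S|%:R * N))); last first.
    by apply: lerB => //; exact: GT.
  by rewrite nE le_eqVlt; apply/orP; left; apply/eqP; ring.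
by rewrite ler_pM2l.
Qed.

End W5S.

Section W6S.
Set Implicit Arguments. Unset Strict Implicit. Unset Printing Implicit Defensive.
Local Open Scope ring_scope.
Local Open Scope sesquilinear_scope.

Lemma adj_minus_sym n (adj : rel 'I_n) (S : {set 'I_n}) : symmetric adj ->
  symmetric (adj_minus adj S).
Proof. by move=> sym x y; rewrite /adj_minus /= sym; case: (adj y x); case: (x \in S); case: (y \in S). Qed.

Lemma comp_notin n (adj : rel 'I_n) (S : {set 'I_n}) w u : symmetric adj -> w \notin S ->
  connect (adj_minus adj S) w u -> u \notin S.
Proof.
move=> sym wS; rewrite (sym_connect_sym (adj_minus_sym S sym)).
case/connectP => [[|z p]] /=; first by move=> _ <-.
by case/andP => /and3P [].
Qed.

Lemma sum_ind n (A : {set 'I_n}) : \sum_u (u \in A)%:R = #|A|%:R :> algC.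
Proof.
rewrite -sum1_card natr_sum [RHS]big_mkcond /=; apply: eq_bigr => j _.
by case: (j \in A).
Qed.

Lemma sum_ge_term n (F : 'I_n -> algC) k : (forall i, 0 <= F i) -> F k <= \sum_i F i.
Proof. by move=> F0; rewrite (bigD1 k) //= lerDl sumr_ge0. Qed.

Lemma TV n (adj : rel 'I_n) (S : {set 'I_n}) (w x0 y0 : 'I_n) : simple_graph adj ->
  w \notin S -> x0 \notin S -> y0 \notin S -> ~~ connect (adj_minus adj S) x0 y0 ->
  exists v : 'rV[algC]_n, [/\ sumv v = 0, 0 < nrm v,
     qf (laplacian adj) v <= #|S|%:R * nrm v &
     forall s, s \in S -> ~~ adj s w -> qf (laplacian adj) v < #|S|%:R * nrm v].
Proof.
move=> [sym irr] wS xS yS nxy.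
set e := adj_minus adj S.
have esym : symmetric e := adj_minus_sym S sym.
pose C := [set u | connect e w u].
pose D := [set u | (u \notin S) && (u \notin C)].
have CS : forall u, u \in C -> u \notin S by move=> u; rewrite inE; exact: comp_notin.
have Dn0 : (0 < #|D|)%N.
  apply/card_gt0P.
  case: (boolP (x0 \in C)) => xC; last by exists x0; rewrite inE xS xC.
  case: (boolP (y0 \in C)) => yC; last by exists y0; rewrite inE yS yC.
  exfalso; move: nxy; rewrite !inE in xC yC.
  rewrite (sym_connect_sym esym) in xC.
  by rewrite (connect_trans xC yC).
pose cD : algC := #|D|%:R; pose cC : algC := #|C|%:R.
pose v : 'rV[algC]_n := \row_u (if u \in C then cD else if u \in S then 0 else - cC).
have vE : forall u, v 0 u = if u \in C then cD else if u \in S then 0 else - cC.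
  by move=> u; rewrite mxE.
have vS : forall u, u \in S -> v 0 u = 0.
  move=> u uS; rewrite vE uS; case: ifP => // uC.
  by move: (CS u uC); rewrite uS.
have wC : w \in C by rewrite inE connect0.
have vw : v 0 w = cD by rewrite vE wC.
have cDn0 : cD != 0 by rewrite /cD pnatr_eq0 -lt0n.
pose t i j := (v 0 i - v 0 j) * (v 0 i - v 0 j)^*.
pose L i j := (adj i j)%:R * t i j.
pose R i j := (i \in S)%:R * (v 0 j * (v 0 j)^*) + (j \in S)%:R * (v 0 i * (v 0 i)^*).
have Rge : forall i j, 0 <= R i j.
  by move=> i j; rewrite addr_ge0 // mulr_ge0 ?ler0n ?mul_conjC_ge0.
have LR : forall i j, L i j <= R i j.
  move=> i j; rewrite /L; case A: (adj i j); last by rewrite mul0r Rge.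
  rewrite mul1r /t /R.
  case Si: (i \in S); case Sj: (j \in S).
  - by rewrite (vS i Si) (vS j Sj) subrr mul0r addr_ge0 // mulr_ge0 ?ler0n ?mul_conjC_ge0.
  - by rewrite (vS i Si) sub0r rmorphN mulrNN mul1r mul0r addr0.
  - by rewrite (vS j Sj) subr0 mul0r mul1r add0r.
  have eij : e i j by rewrite /e /adj_minus /= A Si Sj.
  have CE : (i \in C) = (j \in C).
    rewrite !inE; apply/idP/idP => H.
      exact: connect_trans H (connect1 eij).
    by apply: connect_trans H (connect1 _); rewrite esym.
  have -> : v 0 i = v 0 j by rewrite !vE CE Si Sj.
  by rewrite subrr mul0r addr_ge0 // mulr_ge0 ?ler0n ?mul_conjC_ge0.
have sR : \sum_i \sum_j R i j = 2 * (#|S|%:R * nrm v).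
  rewrite /R; under eq_bigr => i _ do rewrite big_split /=.
  rewrite big_split /=.
  under [X in X + _]eq_bigr => i _ do rewrite -mulr_sumr -nrm_sum.
  under [X in _ + X]eq_bigr => i _ do rewrite -mulr_suml sum_ind.
  rewrite -mulr_suml -mulr_sumr sum_ind -nrm_sum; ring.
have E := Eform (conj sym irr) v.
exists v; split.
- rewrite sumv_sum.
  transitivity (\sum_u ((u \in C)%:R * cD - (u \in D)%:R * cC)).
    have DE : forall u, (u \in D) = (u \notin S) && (u \notin C) by move=> u; rewrite inE.
    apply: eq_bigr => u _; rewrite vE DE.
    case Cu: (u \in C); case Su: (u \in S) => /=;
      by rewrite ?mul1r ?mul0r ?subr0 ?sub0r.
  by rewrite sumrB -!mulr_suml !sum_ind /cC /cD mulrC subrr.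
- rewrite nrm_sum; apply: (lt_le_trans _ (sum_ge_term w _)).
    by rewrite vw mul_conjC_gt0.
  by move=> i; rewrite mul_conjC_ge0.
- rewrite -(ler_pM2l (x := 2)) // E -sR.
  by apply: ler_sum => i _; apply: ler_sum => j _; exact: LR.
move=> s sS nsw; rewrite -(ltr_pM2l (x := 2)) // E -sR -subr_gt0 -sumrB.
under eq_bigr => i _ do rewrite -sumrB.
apply: (lt_le_trans _ (sum_ge_term s _)); last first.
  by move=> i; apply: sumr_ge0 => j _; rewrite subr_ge0 LR.
apply: (lt_le_trans _ (sum_ge_term w _)); last first.
  by move=> j; rewrite subr_ge0 LR.
rewrite /L (negbTE nsw) mul0r subr0 /R sS (negbTE wS) mul0r addr0 mul1r.
by rewrite vw mul_conjC_gt0.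
Qed.

End W6S.

Section W7S.
Set Implicit Arguments. Unset Strict Implicit. Unset Printing Implicit Defensive.

Lemma sep_univ n (adj : rel 'I_n) (T : {set 'I_n}) u : symmetric adj ->
  separator adj T -> universal adj u -> u \in T.
Proof.
move=> sym /existsP [x /existsP [y /and4P [xT yT _ nc]]] /forallP uu.
apply: contraR nc => uT.
have ux : forall z, z \notin T -> connect (adj_minus adj T) z u.
  move=> z zT; case: (eqVneq z u) => [->|zu]; first exact: connect0.
  apply: connect1; rewrite /adj_minus /= zT uT !andbT sym.
  by have := uu z; rewrite zu.
have esym : symmetric (adj_minus adj T).
  by move=> a b; rewrite /adj_minus /= sym;
   case: (a \in T); case: (b \in T); rewrite ?andbF ?andbT.
have uy : connect (adj_minus adj T) u y by rewrite (sym_connect_sym esym) ux.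
move: (ux x xT) uy; exact: connect_trans.
Qed.

Lemma set0_nsep n (adj : rel 'I_n) : ~~ separator adj set0.
Proof.
apply/existsP => [[x /existsP [y /and4P [_ _ c nc]]]].
move: nc; rewrite (@eq_connect _ _ adj) ?c // => a b.
by rewrite /adj_minus /= !inE andbT.
Qed.

Lemma cnt_enum n (P : pred 'I_n) : count P (enum 'I_n) = #|P|.
Proof. by rewrite -sum1_count big_enum_cond /= sum1_card. Qed.

Lemma C4 n (adj : rel 'I_n) (s t x y : 'I_n) : symmetric adj -> irreflexive adj ->
  chordal adj -> uniq [:: s; x; t; y] ->
  adj s x -> adj x t -> adj t y -> adj y s -> adj s t || adj x y.
Proof.
move=> sym irr ch un sx xt ty ys.
have gc : graph_cycle adj [:: s; x; t; y].
  by rewrite /graph_cycle un /= sx xt ty ys.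
have := ch _ gc; move/existsP => [u /existsP [v /and5P [uc vc uv vnu unv]]].
move: un; rewrite /= !inE !negb_or => /and4P [/and3P [sx' st' sy'] /andP [xt' xy'] ty' _].
have xs' : x != s by rewrite eq_sym.
have ts' : t != s by rewrite eq_sym.
have ys' : y != s by rewrite eq_sym.
have tx' : t != x by rewrite eq_sym.
have yx' : y != x by rewrite eq_sym.
have yt' : y != t by rewrite eq_sym.
move: uc vc vnu unv uv; rewrite !inE.
case/or4P => /eqP ->; case/or4P => /eqP ->;
  rewrite /next /= ?eqxx ?(negbTE sx') ?(negbTE st') ?(negbTE sy') ?(negbTE xt')
     ?(negbTE xy') ?(negbTE ty') ?(negbTE xs') ?(negbTE ts') ?(negbTE ys')
     ?(negbTE tx') ?(negbTE yx') ?(negbTE yt') ?irr //=.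
all: try by move=> _ _ ->.
all: try by move=> _ _; rewrite sym => ->; rewrite ?orbT.
all: by rewrite ?eqxx /= => ? ?.
Qed.

Lemma bigmin_le_term (I : finType) (P : pred I) (F : I -> nat) m i :
  P i -> \big[minn/m]_(j | P j) F j <= F i.
Proof.
move=> Pi; have := mem_index_enum i.
elim: (index_enum I) => //= a r IH; rewrite inE big_cons => /orP [/eqP <- | ir].
  by rewrite Pi geq_minl.
by case: (P a); rewrite ?(leq_trans (geq_minr _ _)) ?IH.
Qed.

Lemma kappa_min n (adj : rel 'I_n) : simple_graph adj -> connected_graph adj ->
  ~ complete_graph adj ->
  exists S, [/\ separator adj S, #|S| = vertex_connectivity adj &
            forall T, separator adj T -> #|S| <= #|T|].
Proof.
move=> [sym irr] conn ncomp.
have [x [y [xy nxy]]] : exists x y, x != y /\ ~~ adj x y.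
  case: (boolP [exists x, exists y, (x != y) && ~~ adj x y]).
    by move/existsP => [x /existsP [y /andP [h1 h2]]]; exists x, y.
  move=> H; exfalso; apply: ncomp => a b ab; move: H; apply: contraNT => nab.
  by apply/existsP; exists a; apply/existsP; exists b; rewrite ab.
pose S0 := ~: [set x; y].
have xS0 : x \notin S0 by rewrite !inE eqxx.
have yS0 : y \notin S0 by rewrite !inE eqxx orbT.
have sep0 : separator adj S0.
  apply/existsP; exists x; apply/existsP; exists y.
  rewrite xS0 yS0 conn /=; apply/negP => /connectP [[|z p]] /=.
    by move=> _ yx; move: xy; rewrite yx eqxx.
  case/andP => /and3P [xz _ zS] _ _; move: zS; rewrite !inE negbK.
  by case/orP => /eqP zE; move: xz; rewrite zE ?irr // (negbTE nxy).
case: (arg_minnP (fun T : {set 'I_n} => #|T|) sep0) => Smin sepS minS.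
exists Smin; split => //.
apply/eqP; rewrite eqn_leq; apply/andP; split; last first.
  exact: bigmin_le_term.
rewrite /vertex_connectivity; apply: (big_ind (fun m => #|Smin| <= m)).
- apply: (leq_trans (minS _ sep0)).
  have : #|S0| < #|[set: 'I_n]|.
    by apply: proper_card; rewrite properT; apply/eqP => E; move: xS0; rewrite E inE.
  rewrite cardsT card_ord => h; rewrite -ltnS prednK //; exact: leq_ltn_trans (leq0n _) h.
- by move=> a b ha hb; rewrite leq_min ha hb.
- by move=> T; exact: minS.
Qed.

End W7S.

Theorem theorem2 (n : nat) (adj : rel 'I_n) :
  simple_graph adj -> connected_graph adj -> chordal adj ->
  ~ complete_graph adj ->
  (((vertex_connectivity adj)%:R)%R = algebraic_connectivity adj :> algC <->
   exists S : {set 'I_n},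
     minimal_separator adj S /\ (forall v, v \in S -> universal adj v)).
Proof.
move=> sg conn chord ncomp.
have [sym irr] := sg.
have [Smin [sepS kE minS]] := kappa_min sg conn ncomp.
set k := vertex_connectivity adj in kE *.
have [x0 [y0 [x0S y0S ncxy]]] : exists x0 y0, [/\ x0 \notin Smin, y0 \notin Smin &
    ~~ connect (adj_minus adj Smin) x0 y0].
  move/existsP: sepS => [x0 /existsP [y0 /and4P [h1 h2 _ h4]]].
  by exists x0, y0.
have k0 : (0 < k)%N.
  rewrite -kE card_gt0; apply/eqP => E; move: sepS; rewrite E.
  by move: (set0_nsep adj) => /negbTE ->.
have x0y0 : x0 != y0 by apply: contraNneq ncxy => ->; rewrite connect0.
have n1 : (1 < n)%N.
  have := max_card (mem [set x0; y0]).
  by rewrite cards2 x0y0 card_ord.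
have n0 : (0 < n)%N by apply: ltn_trans n1.
have pe := spectrum_perm sym.
set rs := laplacian_spectrum adj in pe *.
have rsR : all (fun z => z \is Num.real) rs.
  rewrite (perm_all _ pe) all_map; apply/allP => i _ /=; exact: spd_real.
have szrs : size rs = n by rewrite (perm_size pe) size_map size_enum_ord.
have [aR [cnta lea]] := sort_facts rsR szrs n1.
rewrite /algebraic_connectivity /laplacian_eigs -/rs.
set a := nth _ _ _ in aR cnta lea *.
Local Open Scope ring_scope.
have AE := lap_decomp sym.
have Pu := spectral_unitarymx (laplacian adj).
set D := spectral_diag (laplacian adj) in AE.
set P := spP adj in AE.
have DR : forall i, D 0 i \is Num.real by move=> i; exact: spd_real.
have oA : onev n *m laplacian adj = 0.
  apply/matrixP => i j; rewrite !mxE.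
  under eq_bigr => l _ do rewrite mxE mul1r lapE //.
  rewrite sumrB (bigD1 j) //= eqxx mul1r big1 ?addr0; last first.
    by move=> l lj; rewrite (negbTE lj) mul0r.
  rewrite degE; apply/eqP; rewrite subr_eq0; apply/eqP; apply: eq_bigr => l _.
  by rewrite sym.
have cu : forall c, (count (fun z => (z < c)%R) rs <= 1)%N <->
    (forall i j, D 0 i < c -> D 0 j < c -> i = j).
  move=> c; rewrite ((permP pe) _) count_map cnt_enum; split.
    move/card_le1P => H i j Di Dj.
    have := H i Di j; rewrite !inE /= Dj => /esym /eqP.
    by [].
  move=> H; apply/card_le1P => i Di j; rewrite !inE /=.
  apply/idP/idP => [Dj|/eqP -> //]; apply/eqP; exact: H.
have k0' : 0 < (k%:R : algC) by rewrite ltr0n.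
split.
  move=> Hka.
  have U : forall i j, D 0 i < k%:R -> D 0 j < k%:R -> i = j.
    by apply/cu; rewrite Hka.
  have CLk := CL Pu AE n0 oA DR k0' U.
  have adjall : forall s w, s \in Smin -> w \notin Smin -> adj s w.
    move=> s w sS wS; apply/negPn/negP => nsw.
    have [v [sv nv _ strict]] := TV sg wS x0S y0S ncxy.
    have := strict s sS nsw; rewrite kE => lt.
    by move: (CLk v sv); rewrite lt_geF.
  exists Smin; split.
    apply/andP; split => //; apply/forallP => T; apply/implyP => TS.
    apply/negP => sepT; have := proper_card TS; rewrite ltnNge.
    by rewrite (minS T sepT).
  move=> s sS; apply/forallP => w; apply/implyP => ws.
  case: (boolP (w \in Smin)) => wS; last exact: adjall.
  have neq : forall u z, u \in Smin -> z \notin Smin -> u != z.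
    by move=> u z uS zS; apply: contraNneq zS => <-.
  have un : uniq [:: s; x0; w; y0].
    rewrite /= !inE !negb_or (neq s x0) // (neq s y0) // eq_sym ws.
    by rewrite eq_sym (neq w x0) // x0y0 (neq w y0).
  have e2 : adj x0 w by rewrite sym; apply: adjall.
  have e4 : adj y0 s by rewrite sym; apply: adjall.
  have := C4 sym irr chord un (adjall s x0 sS x0S) e2 (adjall w y0 wS y0S) e4.
  case/orP => // a0y0; exfalso; move/negP: ncxy; apply.
  by apply: connect1; rewrite /adj_minus /= a0y0 x0S y0S.
case=> S [/andP [sepSS _] univS].
have SsubSmin : S \subset Smin.
  by apply/subsetP => u uS; exact: (sep_univ sym sepS (univS u uS)).
have SE : #|S| = k.
  apply/eqP; rewrite eqn_leq -{1}kE subset_leq_card //= -kE minS //.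
have LBk := LB sg univS; rewrite SE in LBk.
have U := CL2 Pu AE LBk.
have ka : k%:R <= a by apply: lea; [exact: realn | apply/cu].
have ak : a <= k%:R.
  rewrite real_leNgt ?realn //; apply/negP => ka'.
  have Ua := (cu a).1 cnta.
  have a0 : 0 < a := lt_trans k0' ka'.
  have CLa := CL Pu AE n0 oA DR a0 Ua.
  have [v [sv nv le _]] := TV sg x0S x0S y0S ncxy.
  rewrite kE in le.
  have := le_trans (CLa v sv) le.
  by rewrite lt_geF // ltr_pM2r.
by apply/le_anti; rewrite ka ak.
Qed.
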